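(* Let $R$ be a nonempty set of reward functions $r':\mathcal{S}\times\mathcal{A}\to\mathbb{R}$ and define $$R^*(R)=\Big\{\,r^*:\mathcal{S}\times\mathcal{A}\to\mathbb{R}\ :\ \sum_{a\in\mathcal{A}}e^{r^*(s,a)-r'(s,a)}\le1\ \text{for all } s\in\mathcal{S},\ r'\in R\Big\}.$$ Then for every $r^*\in R^*(R)$ and every $\pi\in\Pi$, $$J(\pi,r^* )\le\inf_{r'\in R}\mathbb{E}_\pi\Big[\sum_{t=1}^T r'(s_t,a_t)\Big].$$
   Context: Finite-horizon MDP: finite state set $\mathcal{S}$, finite action set $\mathcal{A}$, horizon $T\ge1$, initial distribution $p_1$, transition kernel $p(s'\mid s,a)$. $\Pi$ is the set of Markov (possibly time-dependent) policies $\pi=(\pi_t(\cdot\mid s))_{t=1}^T$, with $\pi(a_t\mid s_t)$ meaning $\pi_t(a_t\mid s_t)$; $\mathbb{E}_\pi$ is expectation over trajectories generated by $\pi$. The MaxEnt RL objective is $J(\pi,r)=\mathbb{E}_\pi[\sum_{t=1}^T r(s_t,a_t)]+\mathcal{H}_\pi[a\mid s]$ with $\mathcal{H}_\pi[a\mid s]=\mathbb{E}_\pi[-\sum_{t=1}^T\log\pi(a_t\mid s_t)]$. *)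

(* Defs.v *)
From Stdlib Require Import Reals.
Open Scope R_scope.

(* States are 0..nS-1, actions are 0..nA-1 (finite sets encoded by indices). *)

Fixpoint sumR (n : nat) (f : nat -> R) : R :=
  match n with
  | O => 0
  | S n' => sumR n' f + f n'
  end.

Definition is_distr (n : nat) (f : nat -> R) : Prop :=
  (forall i, (i < n)%nat -> 0 <= f i) /\ sumR n f = 1.

(* Finite-horizon MDP data:
   p1 s      : initial distribution,
   p s a s'  : transition kernel p(s' | s, a). *)
Definition valid_MDP (nS nA : nat) (p1 : nat -> R) (p : nat -> nat -> nat -> R) : Prop :=
  is_distr nS p1 /\
  (forall s a, (s < nS)%nat -> (a < nA)%nat -> is_distr nS (p s a)).

(* Markov, time-dependent policy: pi t s a = pi_t(a | s), for t = 1..T. *)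
Definition valid_policy (nS nA T : nat) (pi : nat -> nat -> nat -> R) : Prop :=
  forall t s, (1 <= t <= T)%nat -> (s < nS)%nat -> is_distr nA (pi t s).

(* Expectation, over the trajectory distribution generated by pi, of
   acc + sum_{u = t}^{t+k-1} g(u, s_u, a_u), starting at state s at time t. *)
Fixpoint traj_exp (nS nA : nat) (p : nat -> nat -> nat -> R)
    (pi : nat -> nat -> nat -> R) (g : nat -> nat -> nat -> R)
    (k t s : nat) (acc : R) : R :=
  match k with
  | O => acc
  | S k' =>
      sumR nA (fun a => pi t s a *
        sumR nS (fun s' => p s a s' *
          traj_exp nS nA p pi g k' (S t) s' (acc + g t s a)))
  end.

Definition Epi (nS nA T : nat) (p1 : nat -> R) (p : nat -> nat -> nat -> R)
    (pi : nat -> nat -> nat -> R) (g : nat -> nat -> nat -> R) : R :=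
  sumR nS (fun s => p1 s * traj_exp nS nA p pi g T 1 s 0).

Definition Jmaxent (nS nA T : nat) (p1 : nat -> R) (p : nat -> nat -> nat -> R)
    (pi : nat -> nat -> nat -> R) (r : nat -> nat -> R) : R :=
  Epi nS nA T p1 p pi (fun _ s a => r s a)
  + Epi nS nA T p1 p pi (fun t s a => - ln (pi t s a)).

Definition Rstar (nS nA : nat) (Rset : (nat -> nat -> R) -> Prop) (rs : nat -> nat -> R) : Prop :=
  forall s r', (s < nS)%nat -> Rset r' ->
    sumR nA (fun a => exp (rs s a - r' s a)) <= 1.

(* Main.v *)
Require Import Defs.
From Stdlib Require Import Reals Lra Lia.
Open Scope R_scope.

Lemma sumR_plus n f g : sumR n (fun i => f i + g i) = sumR n f + sumR n g.
Proof. induction n; simpl; [lra|rewrite IHn; lra]. Qed.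

Lemma sumR_le n f g : (forall i, (i < n)%nat -> f i <= g i) -> sumR n f <= sumR n g.
Proof. induction n; simpl; intros H; [lra|].
  assert (sumR n f <= sumR n g) by (apply IHn; intros; apply H; lia).
  assert (f n <= g n) by (apply H; lia). lra. Qed.

Lemma sumR_scal n c f : sumR n (fun i => c * f i) = c * sumR n f.
Proof. induction n; simpl; [lra|rewrite IHn; lra]. Qed.


Lemma sumR_ext n f g : (forall i, f i = g i) -> sumR n f = sumR n g.
Proof. induction n; simpl; intros H; [lra| rewrite IHn, H; auto]. Qed.

Lemma traj_add nS nA p pi g1 g2 g k : forall t s a1 a2,
  (forall t s a, g t s a = g1 t s a + g2 t s a) ->
  traj_exp nS nA p pi g1 k t s a1 + traj_exp nS nA p pi g2 k t s a2
  = traj_exp nS nA p pi g k t s (a1 + a2).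
Proof.
  induction k; intros t s a1 a2 Hg; simpl; [reflexivity|].
  rewrite <- sumR_plus. apply sumR_ext; intro a.
  rewrite <- Rmult_plus_distr_l. f_equal.
  rewrite <- sumR_plus. apply sumR_ext; intro s'.
  rewrite <- Rmult_plus_distr_l. f_equal.
  rewrite IHk by exact Hg. f_equal. rewrite Hg. ring.
Qed.

Lemma gibbs x q : 0 <= q -> q * (x - ln q) <= exp x - q.
Proof.
  intros Hq. destruct (Req_dec q 0) as [->|Hq0].
  - pose proof (exp_pos x). lra.
  - assert (0 < q) by lra.
    pose proof (exp_ineq1_le (x - ln q)).
    unfold Rminus in H0 at 2. rewrite exp_plus, exp_Ropp, exp_ln in H0 by lra.
    apply Rmult_le_compat_l with (r := q) in H0; [|lra].
    replace (q * (exp x * / q)) with (exp x) in H0 by (field; lra). lra.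
Qed.

Lemma main_ineq nS nA T p1 p Rset rs pi r' :
  valid_MDP nS nA p1 p -> Rstar nS nA Rset rs -> valid_policy nS nA T pi -> Rset r' ->
  forall k t s acc, (1 <= t)%nat -> (t + k <= T + 1)%nat -> (s < nS)%nat ->
  traj_exp nS nA p pi (fun t s a => rs s a - ln (pi t s a) - r' s a) k t s acc <= acc.
Proof.
  intros [_ Hp] Hst Hpi Hr. induction k; intros t s acc Ht Htk Hs; simpl; [lra|].
  destruct (Hpi t s ltac:(lia) Hs) as [Hpos Hsum].
  eapply Rle_trans with (sumR nA (fun a => pi t s a * (acc + (rs s a - ln (pi t s a) - r' s a)))).
  - apply sumR_le; intros a Ha. apply Rmult_le_compat_l; [auto|].
    destruct (Hp s a Hs Ha) as [Hppos Hpsum].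
    eapply Rle_trans with (sumR nS (fun s' => p s a s' * (acc + (rs s a - ln (pi t s a) - r' s a)))).
    + apply sumR_le; intros s' Hs'. apply Rmult_le_compat_l; [auto|].
      apply IHk; lia.
    + rewrite sumR_ext with (g := fun s' => (acc + (rs s a - ln (pi t s a) - r' s a)) * p s a s')
        by (intro; ring).
      rewrite sumR_scal, Hpsum. lra.
  - eapply Rle_trans with (sumR nA (fun a => pi t s a * acc + (exp (rs s a - r' s a) - pi t s a))).
    + apply sumR_le; intros a Ha. pose proof (gibbs (rs s a - r' s a) (pi t s a) (Hpos a Ha)).
      replace (rs s a - ln (pi t s a) - r' s a) with (rs s a - r' s a - ln (pi t s a)) by ring.
      lra.
    + rewrite sumR_plus.
      rewrite sumR_ext with (f := fun a => exp (rs s a - r' s a) - pi t s a)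
        (g := fun a => exp (rs s a - r' s a) + (-1) * pi t s a) by (intro; ring).
      rewrite sumR_plus, sumR_scal.
      rewrite sumR_ext with (f := fun a => pi t s a * acc) (g := fun a => acc * pi t s a)
        by (intro; ring).
      rewrite sumR_scal, Hsum. pose proof (Hst s r' Hs Hr). lra.
Qed.

Theorem corollary3 (nS nA T : nat) (p1 : nat -> R) (p : nat -> nat -> nat -> R)
  (Rset : (nat -> nat -> R) -> Prop) (rs : nat -> nat -> R)
  (pi : nat -> nat -> nat -> R) :
  (1 <= T)%nat ->
  valid_MDP nS nA p1 p ->
  (exists r0, Rset r0) ->
  Rstar nS nA Rset rs ->
  valid_policy nS nA T pi ->
  forall r', Rset r' ->
    Jmaxent nS nA T p1 p pi rs <= Epi nS nA T p1 p pi (fun _ s a => r' s a).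
Proof.
  intros HT Hm _ Hst Hpi r' Hr. unfold Jmaxent, Epi.
  set (h := fun t s a => rs s a - ln (pi t s a) - r' s a).
  assert (E : forall s, traj_exp nS nA p pi (fun _ s a => rs s a) T 1 s 0
     + traj_exp nS nA p pi (fun t s a => - ln (pi t s a)) T 1 s 0
     = traj_exp nS nA p pi h T 1 s 0
     + traj_exp nS nA p pi (fun _ s a => r' s a) T 1 s 0).
  { intro s. rewrite (traj_add _ _ _ _ _ _ (fun t s a => rs s a - ln (pi t s a))) by (intros; ring).
    rewrite (traj_add _ _ _ _ _ _ (fun t s a => rs s a - ln (pi t s a))) by (intros; unfold h; ring).
    reflexivity. }
  rewrite <- sumR_plus.
  apply sumR_le. intros s Hs. rewrite <- Rmult_plus_distr_l, E, Rmult_plus_distr_l.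
  pose proof Hm as [[Hp1 _] Hp].
  assert (traj_exp nS nA p pi h T 1 s 0 <= 0).
  { apply (main_ineq nS nA T p1 p Rset rs pi r'); auto; lia. }
  pose proof (Hp1 s Hs).
  assert (p1 s * traj_exp nS nA p pi h T 1 s 0 <= 0) by (pose proof (Rmult_le_compat_l (p1 s) _ _ H0 H); lra). lra.
Qed.
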